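(* For every $k\ge1$, the homomorphisms $\varphi_k\colon G_{k-1}\to\mathbb{Z}$ and $\psi_k\colon H_{k-1}\to\mathbb{Z}$ defined below are invariant under conjugation by $\mathbb{F}_2$: $\varphi_k(hgh^{-1})=\varphi_k(g)$ for all $g\in G_{k-1}$, $h\in\mathbb{F}_2$, and $\psi_k(hgh^{-1})=\psi_k(g)$ for all $g\in H_{k-1}$, $h\in\mathbb{F}_2$ (in particular $G_{k-1}$ and $H_{k-1}$ are normal in $\mathbb{F}_2$).
   Context: $\mathbb{F}_2$ is the free group on $x,y$. Let $\tilde K$ be the graph with vertex set $\mathbb{Z}^2$ and oriented edges $x^iy^jX$ from $(i,j)$ to $(i+1,j)$ and $x^iy^jY$ from $(i,j)$ to $(i,j+1)$. A $1$-chain is written $\alpha=P_\alpha(x,y)X+Q_\alpha(x,y)Y$ with $P_\alpha,Q_\alpha$ integer Laurent polynomials (coefficient of $x^iy^j$ in $P_\alpha$ = coefficient of edge $x^iy^jX$, similarly for $Q_\alpha$). For $g\in[\mathbb{F}_2,\mathbb{F}_2]$ written as a word in $x^{\pm1},y^{\pm1}$, the cycle $\alpha_g$ is the $1$-cycle traced by the lattice path from $(0,0)$ in which $x,x^{-1},y,y^{-1}$ move by $(1,0),(-1,0),(0,1),(0,-1)$ along the corresponding edges, each edge counted with sign $+1$ if traversed in its orientation and $-1$ otherwise; its homology class depends only on $g$. Put $f_g(y)=P_{\alpha_g}(1,y)$ and $g_g(x)=Q_{\alpha_g}(x,1)$. Set $G_0=H_0=[\mathbb{F}_2,\mathbb{F}_2]$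 and inductively, for $k\ge1$, $\varphi_k(g)=f_g^{(k)}(1)/k!$ for $g\in G_{k-1}$, $\psi_k(g)=g_g^{(k)}(1)/k!$ for $g\in H_{k-1}$ (integers, since the $k$th derivative of an integer Laurent polynomial is divisible by $k!$), $G_k=\ker\varphi_k$, $H_k=\ker\psi_k$. These $\varphi_k,\psi_k$ are group homomorphisms to $\mathbb{Z}$. *)

(* Defs.v *)
From HB Require Import structures.
From mathcomp Require Import all_boot all_order all_algebra.
From Stdlib Require Import Relations.
Set Implicit Arguments. Unset Strict Implicit. Unset Printing Implicit Defensive.
Import Order.TTheory GRing.Theory Num.Theory.
Local Open Scope ring_scope.

(* Letters of the free group F_2 on x, y:  Lx = x, LxI = x^-1, Ly = y, LyI = y^-1 *)
Inductive letter := Lx | LxI | Ly | LyI.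
Definition word := seq letter.

Definition inv_letter (a : letter) : letter :=
  match a with Lx => LxI | LxI => Lx | Ly => LyI | LyI => Ly end.

(* group operations on representatives: product = concatenation *)
Definition winv (w : word) : word := rev (map inv_letter w).
Definition wconj (h g : word) : word := h ++ g ++ winv h.

Inductive red1 : word -> word -> Prop :=
  | red1_step u v a : red1 (u ++ a :: inv_letter a :: v) (u ++ v).
Definition freeeq : word -> word -> Prop := clos_refl_sym_trans word red1.

Inductive comm_sub : word -> Prop :=
  | cs_nil : comm_sub [::]
  | cs_comm a b : comm_sub (a ++ b ++ winv a ++ winv b)
  | cs_cat u v : comm_sub u -> comm_sub v -> comm_sub (u ++ v)
  | cs_inv u : comm_sub u -> comm_sub (winv u)
  | cs_feq u v : freeeq u v -> comm_sub u -> comm_sub v.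

(* The 1-chain alpha_g traced by the lattice path from p: list of signed
   edges (isX, start vertex (i,j), sign).  Edge x^i y^j X goes (i,j)->(i+1,j),
   x^i y^j Y goes (i,j)->(i,j+1). *)
Fixpoint chain (p : int * int) (w : word) : seq (bool * (int * int) * int) :=
  match w with
  | [::] => [::]
  | a :: w' =>
    let: (i, j) := p in
    match a with
    | Lx  => (true, (i, j), 1) :: chain (i + 1, j) w'
    | LxI => (true, (i - 1, j), -1) :: chain (i - 1, j) w'
    | Ly  => (false, (i, j), 1) :: chain (i, j + 1) w'
    | LyI => (false, (i, j - 1), -1) :: chain (i, j - 1) w'
    end
  end.

Definition alpha (g : word) := chain (0, 0) g.

(* A one-variable integer Laurent polynomial  sum c t^e  as a list of
   (coefficient c, exponent e) terms. *)
Definition laurent := seq (int * int).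
Definition lderiv (p : laurent) : laurent := map (fun t => (t.1 * t.2, t.2 - 1)) p.
Definition lderivn (k : nat) (p : laurent) : laurent := iter k lderiv p.
Definition leval1 (p : laurent) : int := \sum_(t <- p) t.1.

(* f_g(y) = P_{alpha_g}(1,y) ;  g_g(x) = Q_{alpha_g}(x,1) *)
Definition fpoly (g : word) : laurent :=
  [seq (e.2, e.1.2.2) | e <- alpha g & e.1.1].
Definition gpoly (g : word) : laurent :=
  [seq (e.2, e.1.2.1) | e <- alpha g & ~~ e.1.1].

Definition phi (k : nat) (g : word) : rat :=
  (leval1 (lderivn k (fpoly g)))%:~R / (k`!)%:R.
Definition psi (k : nat) (g : word) : rat :=
  (leval1 (lderivn k (gpoly g)))%:~R / (k`!)%:R.

Fixpoint Gk (k : nat) (g : word) : Prop :=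
  match k with 0 => comm_sub g | k'.+1 => Gk k' g /\ phi k g = 0 end.
Fixpoint Hk (k : nat) (g : word) : Prop :=
  match k with 0 => comm_sub g | k'.+1 => Hk k' g /\ psi k g = 0 end.

(* Main.v *)
Require Import Defs.
From mathcomp Require Import all_boot all_order all_algebra.
From mathcomp Require Import ring.
From Stdlib Require Import Relations.
Set Implicit Arguments. Unset Strict Implicit. Unset Printing Implicit Defensive.
Import Order.TTheory GRing.Theory Num.Theory.
Local Open Scope ring_scope.

Definition ff (e : int) (k : nat) : int := \prod_(i < k) (e - i%:Z).

Lemma ff0 e : ff e 0 = 1.
Proof. by rewrite /ff big_ord0. Qed.

Lemma ffS_r e k : ff e k.+1 = ff e k * (e - k%:Z).
Proof. by rewrite /ff big_ord_recr. Qed.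

Lemma ffS_l e k : ff e k.+1 = e * ff (e - 1) k.
Proof.
rewrite /ff big_ord_recl subr0; congr (_ * _); apply: eq_bigr => i _.
by rewrite -addrA -opprD -PoszD.
Qed.

Lemma ff_shift1 e k : ff (e + 1) k.+1 = ff e k.+1 + k.+1%:Z * ff e k.
Proof.
rewrite ffS_l addrK ffS_r -addn1 PoszD; ring.
Qed.

Definition mom (j : nat) (l : laurent) : int := \sum_(t <- l) t.1 * ff t.2 j.

Lemma lderivn_eq k p :
  lderivn k p = map (fun t => (t.1 * ff t.2 k, t.2 - k%:Z)) p.
Proof.
elim: k => [|k IH].
  rewrite /lderivn /= -[LHS]map_id; apply: eq_map => -[c e] /=.
  by rewrite ff0 mulr1 subr0.
rewrite /lderivn iterS -/(lderivn k p) IH /lderiv -map_comp.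
apply: eq_map => -[c e] /=.
by rewrite ffS_r mulrA -addn1 PoszD opprD addrA.
Qed.

Lemma leval1_mom k p : leval1 (lderivn k p) = mom k p.
Proof. by rewrite lderivn_eq /leval1 big_map. Qed.

Definition sh (b : int) (l : laurent) : laurent := map (fun t => (t.1, t.2 + b)) l.

Lemma momsh j l : mom j (sh 1 l) = mom j l + j%:Z * mom j.-1 l.
Proof.
case: j => [|j].
  rewrite mul0r addr0 /mom /sh big_map; apply: eq_bigr => t _; by rewrite !ff0.
rewrite /mom /sh big_map mulr_sumr -big_split /=; apply: eq_bigr => t _.
rewrite ff_shift1; ring.
Qed.

Lemma mom_cat j l1 l2 : mom j (l1 ++ l2) = mom j l1 + mom j l2.
Proof. by rewrite /mom big_cat. Qed.

Definition neg (t : int * int) := (- t.1, t.2).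

Lemma mom_revneg j l : mom j (rev (map neg l)) = - mom j l.
Proof.
by rewrite /mom big_rev big_map -sumrN; apply: eq_bigr => t _; rewrite /= mulNr.
Qed.

Definition Q (l : laurent) k := forall j, (j < k)%N -> mom j l = 0.

Lemma step_fwd l k : Q l k -> Q (sh 1 l) k /\ mom k (sh 1 l) = mom k l.
Proof.
move=> Hq; split.
  move=> j jk; rewrite momsh (Hq j jk) (Hq j.-1) ?mulr0 ?addr0 //.
  by apply: leq_ltn_trans jk; apply: leq_pred.
rewrite momsh; case: k Hq => [|k] Hq; first by rewrite mul0r addr0.
by rewrite (Hq k) // mulr0 addr0.
Qed.

Lemma sh_comp a b l : sh a (sh b l) = sh (b + a) l.
Proof. rewrite /sh -map_comp; apply: eq_map => t /=; by rewrite addrA. Qed.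

Lemma sh0 l : sh 0 l = l.
Proof. rewrite /sh -[RHS]map_id; apply: eq_map => -[c e] /=; by rewrite addr0. Qed.

Lemma step_bwd l k : Q l k -> Q (sh (-1) l) k /\ mom k (sh (-1) l) = mom k l.
Proof.
move=> Hq; set r := sh (-1) l.
have E j : mom j l = mom j r + j%:Z * mom j.-1 r.
  by rewrite -momsh /r sh_comp addNr sh0.
have Hr : Q r k.
  elim=> [|j IH] jk.
    by move: (E 0%N); rewrite Hq // mul0r addr0 => <-.
  move: (E j.+1); rewrite Hq // /= IH; last by apply: ltnW.
  by rewrite mulr0 addr0 => <-.
split=> //; rewrite E; case: k Hq Hr => [|k] Hq Hr; first by rewrite mul0r addr0.
by rewrite (Hr k) // mulr0 addr0.
Qed.

Lemma shift_Q b l k : Q l k -> Q (sh b l) k /\ mom k (sh b l) = mom k l.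
Proof.
move=> Hq.
have Hp n : Q (sh n%:Z l) k /\ mom k (sh n%:Z l) = mom k l.
  elim: n => [|n [IH1 IH2]]; first by rewrite sh0.
  rewrite -addn1 PoszD -sh_comp; have [A B] := step_fwd IH1; split=> //.
  by rewrite B.
have Hn n : Q (sh (- n%:Z) l) k /\ mom k (sh (- n%:Z) l) = mom k l.
  elim: n => [|n [IH1 IH2]]; first by rewrite oppr0 sh0.
  rewrite -addn1 PoszD opprD -sh_comp; have [A B] := step_bwd IH1; split=> //.
  by rewrite B.
by case: b => n; [apply: Hp | rewrite NegzE; apply: Hn].
Qed.

Definition lval (a : letter) : int := match a with Lx => 1 | LxI => -1 | _ => 0 end.
Definition lvaly (a : letter) : int := match a with Ly => 1 | LyI => -1 | _ => 0 end.
Fixpoint dx (w : word) : int := if w is a :: w' then lval a + dx w' else 0.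
Fixpoint dy (w : word) : int := if w is a :: w' then lvaly a + dy w' else 0.

Lemma dx_cat u v : dx (u ++ v) = dx u + dx v.
Proof. elim: u => [|a u IH] /=; by rewrite ?add0r ?IH ?addrA. Qed.
Lemma dy_cat u v : dy (u ++ v) = dy u + dy v.
Proof. elim: u => [|a u IH] /=; by rewrite ?add0r ?IH ?addrA. Qed.

Lemma winv_cons a u : winv (a :: u) = winv u ++ [:: inv_letter a].
Proof. by rewrite /winv map_cons rev_cons cats1. Qed.

Lemma dx_winv u : dx (winv u) = - dx u.
Proof.
elim: u => [|a u IH]; first by rewrite oppr0.
rewrite winv_cons dx_cat IH /= addr0 opprD; case: a => /=; ring.
Qed.
Lemma dy_winv u : dy (winv u) = - dy u.
Proof.
elim: u => [|a u IH]; first by rewrite oppr0.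
rewrite winv_cons dy_cat IH /= addr0 opprD; case: a => /=; ring.
Qed.

Lemma red1_d u v : red1 u v -> dx u = dx v /\ dy u = dy v.
Proof.
case=> u' v' a; rewrite !dx_cat !dy_cat /=.
by case: a => /=; split; ring.
Qed.

Lemma freeeq_d u v : freeeq u v -> dx u = dx v /\ dy u = dy v.
Proof.
elim=> [x y /red1_d //|x //|x y _ [-> ->] //|x y z _ [-> ->] _ [-> ->] //].
Qed.

Lemma comm_sub_d g : comm_sub g -> dx g = 0 /\ dy g = 0.
Proof.
elim=> [//|a b|u v _ [A B] _ [C D]|u _ [A B]|u v /freeeq_d [<- <-] //].
- rewrite !dx_cat !dy_cat !dx_winv !dy_winv; split; ring.
- by rewrite dx_cat dy_cat A B C D addr0.
- by rewrite dx_winv dy_winv A B oppr0.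
Qed.

Lemma inv_letterK a : inv_letter (inv_letter a) = a.
Proof. by case: a. Qed.

Lemma freeeq_cancel x v y : freeeq (x ++ winv v ++ v ++ y) (x ++ y).
Proof.
elim: v x y => [|a v IH] x y /=; first exact: rst_refl.
apply: (rst_trans _ _ _ (x ++ winv v ++ v ++ y)); last exact: IH.
apply: rst_step; rewrite winv_cons -!catA /=.
have := red1_step (x ++ winv v) (v ++ y) (inv_letter a).
by rewrite inv_letterK -!catA.
Qed.

Lemma comm_sub_conj h g : comm_sub g -> comm_sub (wconj h g).
Proof.
move=> Hg.
have H1 := cs_cat (cs_comm h g) Hg.
apply: cs_feq H1.
have := freeeq_cancel (h ++ g ++ winv h) g [::].
by rewrite !cats0 /wconj -!catA.
Qed.

Definition F (s : bool) (c : seq (bool * (int * int) * int)) : laurent :=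
  [seq (e.2, if s then e.1.2.2 else e.1.2.1) | e <- c & e.1.1 == s].

Lemma F_cat s c1 c2 : F s (c1 ++ c2) = F s c1 ++ F s c2.
Proof. by rewrite /F filter_cat map_cat. Qed.

Lemma chain_cat u v i j :
  chain (i, j) (u ++ v) = chain (i, j) u ++ chain (i + dx u, j + dy u) v.
Proof.
elim: u i j => [|a u IH] i j /=; first by rewrite !addr0.
by case: a; rewrite IH /= !addrA ?addr0.
Qed.

Definition shE (da db : int) (e : bool * (int * int) * int) :=
  (e.1.1, (e.1.2.1 + da, e.1.2.2 + db), e.2).
Definition negE (e : bool * (int * int) * int) := (e.1.1, e.1.2, - e.2).

Lemma chain_shift w i j da db :
  chain (i + da, j + db) w = map (shE da db) (chain (i, j) w).
Proof.
elim: w i j => [|a w IH] i j //.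
by case: a => /=; rewrite ?(addrAC i da) ?(addrAC j db) IH.
Qed.

Lemma F_shift s w i j da db :
  F s (chain (i + da, j + db) w) = sh (if s then db else da) (F s (chain (i, j) w)).
Proof.
rewrite chain_shift /F /sh filter_map -!map_comp.
by case: s; apply: eq_map => e.
Qed.

Lemma chain_cancel h i j :
  chain (i + dx h, j + dy h) (winv h) = rev (map negE (chain (i, j) h)).
Proof.
elim: h i j => [|a h IH] i j //.
rewrite winv_cons chain_cat dx_winv dy_winv.
case: a => /=; rewrite ?add0r !addrA ?addr0 IH !addrK /= ?addrK ?subrK
  ?rev_cons ?cats1 //= ?opprK.
Qed.

Lemma F_cancel s h i j :
  F s (chain (i + dx h, j + dy h) (winv h)) = rev (map neg (F s (chain (i, j) h))).
Proof.
rewrite chain_cancel /F filter_rev map_rev filter_map -!map_comp.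
by congr rev; apply: eq_map => e.
Qed.

Lemma mom0_F s w i j : mom 0 (F s (chain (i, j) w)) = if s then dx w else dy w.
Proof.
elim: w i j => [|a w IH] i j; first by case: s; rewrite /mom /F big_nil.
move: (IH); rewrite /mom => IH'.
by case: s IH IH'; case: a => IH IH' /=; rewrite /F /= ?big_cons ?IH' ?ff0 ?mulr1 ?add0r.
Qed.

Lemma F_conj s h g j : dx g = 0 -> dy g = 0 ->
  mom j (F s (alpha (wconj h g))) = mom j (sh (if s then dy h else dx h) (F s (alpha g))).
Proof.
move=> Hx Hy.
rewrite /alpha /wconj chain_cat chain_cat Hx Hy !addr0 !F_cat !mom_cat.

rewrite F_cancel F_shift mom_revneg; ring.
Qed.

Definition Pk s n g := comm_sub g /\ forall j, (0 < j <= n)%N -> mom j (F s (alpha g)) = 0.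

Lemma main_gen s k g h : (1 <= k)%N -> Pk s k.-1 g ->
  mom k (F s (alpha (wconj h g))) = mom k (F s (alpha g)) /\ Pk s k.-1 (wconj h g).
Proof.
move=> k1 [Hc Hm].
have [Hx Hy] := comm_sub_d Hc.
have HQ : Q (F s (alpha g)) k.
  case=> [_|j jk]; first by rewrite /alpha mom0_F Hx Hy; case: ifP.
  by apply: Hm; rewrite /= -ltnS prednK.
have [HQ' Hk] := shift_Q (if s then dy h else dx h) HQ.
split; first by rewrite F_conj.
split; first exact: comm_sub_conj.
move=> j /andP [j0 jk]; rewrite F_conj //; apply: HQ'.
by rewrite -(prednK k1) ltnS.
Qed.


Lemma fpolyE g : fpoly g = F true (alpha g).
Proof. rewrite /fpoly /F /=; congr (map _ _); apply: eq_filter => e; by rewrite eqb_id. Qed.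
Lemma gpolyE g : gpoly g = F false (alpha g).
Proof. rewrite /gpoly /F /=; congr (map _ _); apply: eq_filter => e; by rewrite eqbF_neg. Qed.

Lemma phiE k g : phi k g = (mom k (F true (alpha g)))%:~R / (k`!)%:R.
Proof. by rewrite /phi leval1_mom fpolyE. Qed.
Lemma psiE k g : psi k g = (mom k (F false (alpha g)))%:~R / (k`!)%:R.
Proof. by rewrite /psi leval1_mom gpolyE. Qed.

Lemma frac0 (m : int) k : ((m%:~R : rat) / (k`!)%:R = 0) <-> m = 0.
Proof.
split=> [/eqP|->]; last by rewrite mul0r.
rewrite mulf_eq0 invr_eq0 pnatr_eq0 intr_eq0 => /orP [/eqP //|].
by rewrite eqn0Ngt fact_gt0.
Qed.

Lemma Gk_iff n g : Gk n g <-> Pk true n g.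
Proof.
elim: n => [|n IH] /=.
  by split=> [H|[]//]; split=> // j /andP [a b]; move: (leq_trans a b).
rewrite IH phiE frac0; split.
  move=> [[Hc Hm] H]; split=> // j /andP [j0]; rewrite leq_eqVlt => /orP [/eqP -> //|].
  by rewrite ltnS => jn; apply: Hm; rewrite j0.
move=> [Hc Hm]; split.
  split=> // j /andP [j0 jn]; apply: Hm; rewrite j0 /=; exact: leqW.
by apply: Hm; rewrite /= leqnn.
Qed.

Lemma Hk_iff n g : Hk n g <-> Pk false n g.
Proof.
elim: n => [|n IH] /=.
  by split=> [H|[]//]; split=> // j /andP [a b]; move: (leq_trans a b).
rewrite IH psiE frac0; split.
  move=> [[Hc Hm] H]; split=> // j /andP [j0]; rewrite leq_eqVlt => /orP [/eqP -> //|].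
  by rewrite ltnS => jn; apply: Hm; rewrite j0.
move=> [Hc Hm]; split.
  split=> // j /andP [j0 jn]; apply: Hm; rewrite j0 /=; exact: leqW.
by apply: Hm; rewrite /= leqnn.
Qed.

Theorem lemma3p3 (k : nat) : (1 <= k)%N ->
  (forall g h : word, Gk k.-1 g ->
     phi k (wconj h g) = phi k g /\ Gk k.-1 (wconj h g)) /\
  (forall g h : word, Hk k.-1 g ->
     psi k (wconj h g) = psi k g /\ Hk k.-1 (wconj h g)).
Proof.
move=> k1; split=> g h.
  move/Gk_iff => H; have [A B] := main_gen h k1 H.
  by rewrite !phiE A Gk_iff.
move/Hk_iff => H; have [A B] := main_gen h k1 H.
by rewrite !psiE A Hk_iff.
Qed.
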